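(* Fix a constant $c>0$. There is a constant $\varepsilon>0$ (depending only on $c$) such that for every sufficiently large $n$ and every $c$-Ramsey graph $G$ with $n$ vertices, every treelike resolution refutation of $\Psi'_G$ has at least $n^{\varepsilon\log n}$ clauses; i.e. $\Psi'_G$ requires treelike resolution refutations of size $n^{\Omega(\log n)}$.
   Context: Logarithms are base 2. A graph $G$ on $n$ vertices is $c$-Ramsey if no set of $c\log n$ vertices is a clique or an independent set (assume $c\log n$ is an integer). A resolution refutation of a CNF is a sequence of clauses, each a clause of the formula or derived from earlier clauses $A\lor x$, $B\lor\neg x$ as $A\lor B$, ending in the empty clause; it is treelike if each derived clause is used as a premise at most once. The ''unary encoding'' $\Psi'_G$ has variables $p^i_v$ for $i\in[c\log n]$ and $v\in V(G)$ (meaning index $i$ is mapped to vertex $v$) and a variable $y$, with clauses: for each $i$, $\bigvee_{v}p^i_v$, and $\neg p^i_u\lor\neg p^i_v$ for distinct $u,v$ (each index maps to exactly one vertex); for each vertex $v$ and distinct $i,j$, $\neg p^i_v\lor\neg p^j_v$ (injectivity); for distinct $u,v$ with $\{u,v\}\in E(G)$ and distinct $i,j$, $y\lor\neg p^i_u\lor\neg p^j_v$; for distinct $u,v$ with $\{u,v\}\notin E(G)$ and distinct $i,j$, $\neg y\lor\neg p^i_u\lor\neg p^j_v$. Thus $\Psi'_G$ is satisfiable iff $G$ has a clique or independent set of size $c\log n$. *)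

(* Defs.v *)
From Stdlib Require Import Reals.
From mathcomp Require Import all_boot.

Set Implicit Arguments.
Unset Strict Implicit.
Unset Printing Implicit Defensive.

Definition log2R (x : R) : R := Rdiv (ln x) (ln (INR 2)).

(* A simple graph is a symmetric irreflexive relation e : rel 'I_n. *)
Definition is_clique n (e : rel 'I_n) (S : {set 'I_n}) : Prop :=
  forall u v, u \in S -> v \in S -> u != v -> e u v.

Definition is_indep n (e : rel 'I_n) (S : {set 'I_n}) : Prop :=
  forall u v, u \in S -> v \in S -> u != v -> ~~ e u v.

(* G is c-Ramsey, with k = c log n: no k-set is a clique or independent set. *)
Definition ramsey n (e : rel 'I_n) (k : nat) : Prop :=
  forall S : {set 'I_n}, #|S| = k -> ~ is_clique e S /\ ~ is_indep e S.

(* A literal is (x, b): b = true means the positive literal x,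
   b = false the negative literal ~x.  A clause is a finite set of literals. *)
Definition lit (V : finType) := (V * bool)%type.
Definition clause (V : finType) := {set lit V}.
Definition cnf (V : finType) := clause V -> Prop.

(* Justification of a line of a resolution derivation:
   [FromF]          : the line is a clause of the formula;
   [Resolved i j x] : the line is derived from the earlier lines i (which
                      contains x) and j (which contains ~x) as their resolvent. *)
Inductive just (V : finType) : Type :=
| FromF
| Resolved (i j : nat) (x : V).

Definition derivation (V : finType) := seq (clause V * just V).

Definition resolvent (V : finType) (A B : clause V) (x : V) : clause V :=
  (A :\ (x, true)) :|: (B :\ (x, false)).

Definition line_clause (V : finType) (P : derivation V) (t : nat) : clause V :=
  (nth (set0, FromF V) P t).1.

Definition valid_line (V : finType) (F : cnf V) (P : derivation V) (t : nat) : Prop :=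
  match (nth (set0, FromF V) P t).2 with
  | FromF => F (line_clause P t)
  | Resolved i j x =>
      [/\ i < t, j < t,
          (x, true) \in line_clause P i,
          (x, false) \in line_clause P j &
          line_clause P t = resolvent (line_clause P i) (line_clause P j) x]
  end.

Definition uses (V : finType) (P : derivation V) (s : nat) : nat :=
  \sum_(t < size P)
     match (nth (set0, FromF V) P t).2 with
     | FromF => 0
     | Resolved i j _ => (i == s) + (j == s)
     end.

Definition is_derived (V : finType) (P : derivation V) (s : nat) : bool :=
  if (nth (set0, FromF V) P s).2 is Resolved _ _ _ then true else false.

Definition refutation (V : finType) (F : cnf V) (P : derivation V) : Prop :=
  [/\ 0 < size P,
      (forall t, t < size P -> valid_line F P t) &
      line_clause P (size P).-1 = set0].

Definition treelike_refutation (V : finType) (F : cnf V) (P : derivation V) : Prop :=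
  refutation F P /\
  (forall s, s < size P -> is_derived P s -> uses P s <= 1).

(* Variables: [Some (i, v)] is p^i_v (index i in [k] mapped to vertex v),
   [None] is the variable y. *)
Definition pvar (k n : nat) := option ('I_k * 'I_n).

Definition Psi' (n k : nat) (e : rel 'I_n) : cnf (pvar k n) :=
  fun C =>
    (exists i : 'I_k, C = [set (Some (i, v), true) | v : 'I_n])
 \/ (exists (i : 'I_k) (u v : 'I_n), u != v /\
       C = [set (Some (i, u), false); (Some (i, v), false)])
 \/ (exists (v : 'I_n) (i j : 'I_k), i != j /\
       C = [set (Some (i, v), false); (Some (j, v), false)])
 \/ (exists (u v : 'I_n) (i j : 'I_k), [/\ u != v, e u v & i != j] /\
       C = [set (None, true); (Some (i, u), false); (Some (j, v), false)])
 \/ (exists (u v : 'I_n) (i j : 'I_k), [/\ u != v, ~~ e u v & i != j] /\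
       C = [set (None, false); (Some (i, u), false); (Some (j, v), false)]).

(* Main.v *)
Require Import Defs.
From Stdlib Require Import Reals Lra.
From mathcomp Require Import all_boot.
From mathcomp Require Import zify.

Set Implicit Arguments.
Unset Strict Implicit.
Unset Printing Implicit Defensive.


Section Tree.
Variable V : finType.
Variable F : cnf V.
Variable P : derivation V.
Hypothesis Htree : treelike_refutation F P.

Definition lineJ (t : nat) := (nth (set0, FromF V) P t).2.

Definition prem (N : nat) (u s : 'I_N) : bool :=
  if lineJ u is Resolved i j _ then (i == s :> nat) || (j == s :> nat) else false.

Let N := size P.

Lemma valid t : t < N -> valid_line F P t.
Proof. by case: Htree => [[_ H _] _]; apply: H. Qed.

Lemma prem_lt (u s : 'I_N) : prem u s -> s < u.
Proof.
have := valid (ltn_ord u); rewrite /valid_line /prem /lineJ.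
case: (nth (set0, FromF V) P u).2 => // i j x [Hi Hj _ _ _].
by case/orP=> /eqP <-.
Qed.

Lemma prem_derived (u s : 'I_N) : prem u s -> is_derived P u.
Proof. by rewrite /prem /is_derived /lineJ; case: (nth _ P u).2. Qed.

Lemma connect_le (a s : 'I_N) : connect (@prem N) a s -> s <= a.
Proof.
case/connectP=> p; elim: p a => [|z p IH] a /=; first by move=> _ ->.
case/andP=> Haz Hp Hs; apply: leq_trans (IH _ Hp Hs) _.
exact: ltnW (prem_lt Haz).
Qed.

Lemma connect_step (a s : 'I_N) : connect (@prem N) a s -> a != s ->
  exists2 u, connect (@prem N) a u & prem u s.
Proof.
case/connectP=> p; case/lastP: p => [|q z] /=; first by move=> _ ->; rewrite eqxx.
rewrite rcons_path last_rcons => /andP[Hq Hz] -> _.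
exists (last a q) => //; apply/connectP; by exists q.
Qed.

Lemma connect_derived (a s : 'I_N) : connect (@prem N) a s -> is_derived P s ->
  is_derived P a.
Proof.
case/connectP=> [[|z p]] /=; first by move=> _ ->.
by case/andP=> H _ _ _; apply: prem_derived H.
Qed.

Definition term (s : nat) (t : nat) : nat :=
  match (nth (set0, FromF V) P t).2 with
  | FromF => 0
  | Resolved i j _ => (i == s) + (j == s)
  end.

Lemma usesE s : uses P s = \sum_(t < N) term s t.
Proof. by []. Qed.

Lemma term_prem (u s : 'I_N) : prem u s -> 0 < term s u.
Proof.
rewrite /prem /term /lineJ; case: (nth _ P u).2 => // i j _.
case/orP=> /eqP ->; rewrite eqxx; lia.
Qed.

Lemma uses1 (s : 'I_N) : is_derived P s -> uses P s <= 1.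
Proof. by case: Htree => _ H; apply: H. Qed.

Lemma unique_user (s u u' : 'I_N) : is_derived P s -> prem u s -> prem u' s -> u = u'.
Proof.
move=> Hs Hu Hu'; apply/eqP; apply/negPn/negP => Hne.
have := uses1 Hs; rewrite usesE (bigD1 u) //= (bigD1 u') //=.
  have := term_prem Hu; have := term_prem Hu'. lia.
by rewrite eq_sym.
Qed.

Lemma comparable m : forall (a b s : 'I_N), N - s <= m ->
  connect (@prem N) a s -> connect (@prem N) b s -> is_derived P s ->
  connect (@prem N) a b || connect (@prem N) b a.
Proof.
elim: m => [|m IH] a b s Hm Has Hbs Hs.
  by move: (ltn_ord s) Hm; lia.
case: (eqVneq a s) => [->|Ha]; first by rewrite Hbs orbT.
case: (eqVneq b s) => [->|Hb]; first by rewrite Has.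
have [u Hau Hu] := connect_step Has Ha.
have [u' Hbu Hu'] := connect_step Hbs Hb.
have Heq := unique_user Hs Hu Hu'; subst u'.
apply: (IH a b u) => //; last exact: prem_derived Hu.
have := prem_lt Hu; have := ltn_ord u; lia.
Qed.

Definition D (t : 'I_N) := [set s | connect (@prem N) t s & is_derived P s].

Lemma D_split (t i' j' : 'I_N) x :
  lineJ t = Resolved i' j' x ->
  1 + #|D i'| + #|D j'| <= #|D t|.
Proof.
move=> Ht.
have Hpi : prem t i' by rewrite /prem Ht eqxx.
have Hpj : prem t j' by rewrite /prem Ht eqxx orbT.
have Hti := prem_lt Hpi; have Htj := prem_lt Hpj.
have Htd : is_derived P t by rewrite /is_derived -/(lineJ t) Ht.
have Hsub : t |: (D i' :|: D j') \subset D t.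
  { apply/subsetP => s; rewrite !inE => /orP[/eqP->|/orP[]].
    - by rewrite connect0 Htd.
    - case/andP=> H1 H2; rewrite H2 andbT; apply: connect_trans H1.
      exact: connect1.
    - case/andP=> H1 H2; rewrite H2 andbT; apply: connect_trans H1.
      exact: connect1. }
have Hnot : t \notin D i' :|: D j'.
  rewrite !inE; apply/negP => /orP[]/andP[H _]; move/connect_le: H; lia.
have Hdisj : D i' :&: D j' = set0.
  apply/setP => s; rewrite !inE; apply/negP => /andP[/andP[Hi Hs] /andP[Hj _]].
  have Hid := connect_derived Hi Hs; have Hjd := connect_derived Hj Hs.
  case: (eqVneq i' j') => [Heq|Hne].
    subst j'. have := uses1 Hid; rewrite usesE (bigD1 t) //= /term.
    move: Ht; rewrite /lineJ => ->; rewrite eqxx; lia.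
  case/orP: (comparable (leqnn _) Hi Hj Hs) => Hc.
  - have [u Hu1 Hu2] := connect_step Hc Hne.
    have := unique_user Hjd Hu2 Hpj => Hut; subst u.
    move/connect_le: Hu1; lia.
  - have Hne' : j' != i' by rewrite eq_sym.
    have [u Hu1 Hu2] := connect_step Hc Hne'.
    have := unique_user Hid Hu2 Hpi => Hut; subst u.
    move/connect_le: Hu1; lia.
have := subset_leq_card Hsub.
rewrite cardsU1 Hnot cardsU Hdisj cards0 subn0 /=; lia.
Qed.


Definition fals (a : V -> option bool) (C : clause V) :=
  forall l, l \in C -> a l.1 = Some (~~ l.2).
Definition upd (a : V -> option bool) x b := fun y => if y == x then Some b else a y.

Lemma fals_left a a' (A B : clause V) x :
  a' x = Some false -> (forall y, y != x -> a' y = a y) -> a x != Some true ->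
  fals a (resolvent A B x) -> fals a' A.
Proof.
move=> H1 H2 H3 Hf [y b] Hl /=.
case: (eqVneq (y, b) (x, true)) => [[-> ->]//|Hne].
have Hr : (y, b) \in resolvent A B x by rewrite /resolvent !inE Hne Hl.
have := Hf _ Hr => /= Hy.
case: (eqVneq y x) => [Eyx|Nyx]; last by rewrite H2.
subst y; move: Hne Hy H3; clear Hr Hl; case: b => //= _ ->; by rewrite eqxx.
Qed.

Lemma fals_right a a' (A B : clause V) x :
  a' x = Some true -> (forall y, y != x -> a' y = a y) -> a x != Some false ->
  fals a (resolvent A B x) -> fals a' B.
Proof.
move=> H1 H2 H3 Hf [y b] Hl /=.
case: (eqVneq (y, b) (x, false)) => [[-> ->]//|Hne].
have Hr : (y, b) \in resolvent A B x by rewrite /resolvent !inE Hne Hl orbT.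
have := Hf _ Hr => /= Hy.
case: (eqVneq y x) => [Eyx|Nyx]; last by rewrite H2.
subst y; move: Hne Hy H3; clear Hr Hl; case: b => //= _ ->; by rewrite eqxx.
Qed.

Variable cnt : (V -> option bool) -> nat.
Hypothesis Hsplit : forall a x, a x = None ->
  cnt a <= cnt (upd a x false) + cnt (upd a x true).
Hypothesis Hleaf : forall a C, F C -> fals a C -> cnt a <= 1.

Lemma main_ind t : forall (Ht : t < N) a, fals a (line_clause P t) ->
  cnt a <= #|D (Ordinal Ht)| + 1.
Proof.
elim/ltn_ind: t => t IH Ht a Hf.
have := valid Ht; rewrite /valid_line.
case E: (nth (set0, FromF V) P t).2 => [|i j x].
  move=> HF; have := Hleaf HF Hf; lia.
case=> Hi Hj Hxi Hxj Hres.
have Hi' : i < N by apply: ltn_trans Hi Ht.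
have Hj' : j < N by apply: ltn_trans Hj Ht.
have HD := @D_split (Ordinal Ht) (Ordinal Hi') (Ordinal Hj') x E.
rewrite Hres in Hf.
case Ex: (a x) => [[]|].
- have Hn : a x != Some false by rewrite Ex.
  have := IH j Hj Hj' a (fals_right Ex (fun _ _ => erefl) Hn Hf). lia.
- have Hn : a x != Some true by rewrite Ex.
  have := IH i Hi Hi' a (fals_left Ex (fun _ _ => erefl) Hn Hf). lia.
- have H0 : upd a x false x = Some false by rewrite /upd eqxx.
  have H1 : upd a x true x = Some true by rewrite /upd eqxx.
  have Hy b : forall y, y != x -> upd a x b y = a y by move=> y /negbTE; rewrite /upd => ->.
  have Hn1 : a x != Some true by rewrite Ex.
  have Hn0 : a x != Some false by rewrite Ex.
  have := IH i Hi Hi' _ (fals_left H0 (Hy false) Hn1 Hf).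
  have := IH j Hj Hj' _ (fals_right H1 (Hy true) Hn0 Hf).
  have := Hsplit Ex. lia.
Qed.

Lemma tree_bound : cnt (fun _ => None) <= N + 1.
Proof.
case: Htree => [[HN _ Hlast] _].
have Ht : N.-1 < N by rewrite prednK.
have Hf : fals (fun _ => None) (line_clause P N.-1) by rewrite Hlast => l; rewrite inE.
have := main_ind Ht Hf.
have := max_card (mem (D (Ordinal Ht))); rewrite card_ord => H1 H2. by apply: leq_trans H2 _; rewrite leq_add2r.
Qed.

End Tree.


Section Graph.
Variable n : nat.
Variable e : rel 'I_n.
Hypothesis esym : symmetric e.

Definition hom (b : bool) (X : {set 'I_n}) :=
  [forall u in X, forall v in X, (u != v) ==> (e u v == b)].

Definition Hc b (S : {set 'I_n}) := #|[set X : {set 'I_n} | (X \subset S) && hom b X]|.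

Lemma Hc_mono b (S S' : {set 'I_n}) : S \subset S' -> Hc b S <= Hc b S'.
Proof.
move=> HS; apply: subset_leq_card; apply/subsetP => X; rewrite !inE.
by case/andP=> H1 ->; rewrite (subset_trans H1 HS).
Qed.

Lemma Hc_ge1 b (S : {set 'I_n}) : 1 <= Hc b S.
Proof.
rewrite /Hc card_gt0; apply/set0Pn; exists set0; rewrite inE sub0set /=.
by apply/forallP => u; apply/implyP; rewrite inE.
Qed.

Definition Tb (S : {set 'I_n}) v b := (S :\ v) :&: [set u | e v u == b].

Lemma Hc_split b (S : {set 'I_n}) v : v \in S -> Hc b (S :\ v) + Hc b (Tb S v b) <= Hc b S.
Proof.
move=> Hv.
set F1 := [set X : {set 'I_n} | (X \subset S :\ v) && hom b X].
set F2 := [set X : {set 'I_n} | (X \subset Tb S v b) && hom b X].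
have Hinj : {in F2 &, injective (fun X => v |: X)}.
  move=> X Y; rewrite !inE => /andP[HX _] /andP[HY _] E.
  apply/setP => u; move/setP: E => /(_ u); rewrite !inE.
  case: (eqVneq u v) => [->|//]; rewrite /=.
  have -> : (v \in X) = false.
    apply/negP => /(subsetP HX); by rewrite !inE eqxx.
  have -> // : (v \in Y) = false.
  apply/negP => /(subsetP HY); by rewrite !inE eqxx.
have Hc2 : #|[set v |: X | X in F2]| = #|F2| by rewrite card_in_imset.
have Hdisj : [disjoint F1 & [set v |: X | X in F2]].
  apply/pred0P => Z /=; apply/negP => /andP[]; rewrite inE => /andP[HZ _].
  case/imsetP => X _ EZ; subst Z; move/subsetP: HZ => /(_ v).
  by rewrite !inE eqxx /= => /(_ isT).
have Hsub : F1 :|: [set v |: X | X in F2] \subset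
    [set X : {set 'I_n} | (X \subset S) && hom b X].
  apply/subsetP => Z; rewrite /F1 /F2 in_setU => /orP[].
    rewrite !inE => /andP[HZ ->]; rewrite andbT.
    apply: subset_trans HZ _; exact: subsetDl.
  case/imsetP => X; rewrite !inE => /andP[HX Hh] ->.
  apply/andP; split.
    rewrite subUset sub1set Hv /=; apply: subset_trans HX _.
    apply: subset_trans (subsetIl _ _) _; exact: subsetDl.
  apply/forallP => u; apply/implyP; rewrite !inE => Hu.
  apply/forallP => w; apply/implyP; rewrite !inE => Hw; apply/implyP => Huw.
  have Hh' := forallP Hh.
  case/orP: Hu => [/eqP Eu|Hu]; case/orP: Hw => [/eqP Ew|Hw].
  - by move: Huw; rewrite Eu Ew eqxx.
  - subst u; move/subsetP: HX => /(_ w Hw); rewrite !inE.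
    by case/andP=> _ ->.
  - subst w; move/subsetP: HX => /(_ u Hu); rewrite !inE esym.
    by case/andP=> _ ->.
  - by have := implyP (Hh' u) Hu => /forallP /(_ w) /implyP /(_ Hw) /implyP /(_ Huw).
have := subset_leq_card Hsub.
rewrite cardsU (disjoint_setI0 Hdisj) cards0 subn0 Hc2 => H.
exact: H.
Qed.

Definition PP S := Hc true S * Hc false S.

Lemma PP_step (S : {set 'I_n}) v : v \in S -> exists T : {set 'I_n},
  #|S| <= (2 * #|T|).+1 /\ PP (S :\ v) + PP T <= PP S.
Proof.
move=> Hv.
have Hcard : #|Tb S v true| + #|Tb S v false| = #|S :\ v|.
  rewrite -(cardsID [set u | e v u] (S :\ v)); congr (_ + _).
    apply: eq_card => u; rewrite !inE eqb_id; by case: (u != v); case: (u \in S); case: (e v u).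
  apply: eq_card => u; rewrite !inE eqbF_neg; by case: (u != v); case: (u \in S); case: (e v u).
have HS : #|S| = (#|S :\ v|).+1 by rewrite (cardsD1 v S) Hv.
have S1 := Hc_split true Hv; have S0 := Hc_split false Hv.
have Ht1 : Tb S v true \subset S :\ v by exact: subsetIl.
have Ht0 : Tb S v false \subset S :\ v by exact: subsetIl.
case: (leqP #|Tb S v false| #|Tb S v true|) => Hle.
- exists (Tb S v true); split; first lia.
  have M := Hc_mono false Ht1.
  rewrite /PP.
  have H1 : Hc true (S :\ v) * Hc false (S :\ v) + Hc true (Tb S v true) * Hc false (Tb S v true)
    <= (Hc true (S :\ v) + Hc true (Tb S v true)) * Hc false (S :\ v).
    rewrite mulnDl leq_add2l; exact: leq_mul.
  apply: leq_trans H1 _; apply: leq_mul => //.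
  have := Hc_mono false (subD1set S v); lia.
- exists (Tb S v false); split; first lia.
  have M := Hc_mono true Ht0.
  rewrite /PP.
  have H1 : Hc true (S :\ v) * Hc false (S :\ v) + Hc true (Tb S v false) * Hc false (Tb S v false)
    <= Hc true (S :\ v) * (Hc false (S :\ v) + Hc false (Tb S v false)).
    rewrite mulnDr leq_add2l; exact: leq_mul.
  apply: leq_trans H1 _; apply: leq_mul => //.
  have := Hc_mono true (subD1set S v); lia.
Qed.

Lemma PP_helper a A : (forall T : {set 'I_n}, a <= #|T| -> A <= PP T) ->
  forall r (S : {set 'I_n}), 2 * a + 1 + r <= #|S| -> (r + 1) * A <= PP S.
Proof.
move=> HA; elim=> [|r IH] S HS.
  have : 0 < #|S| by lia.
  rewrite card_gt0 => /set0Pn [v Hv].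
  have [T [HT HP]] := PP_step Hv.
  have := HA T (ltac:(lia)); lia.
have : 0 < #|S| by lia.
rewrite card_gt0 => /set0Pn [v Hv].
have [T [HT HP]] := PP_step Hv.
have HS' : #|S| = (#|S :\ v|).+1 by rewrite (cardsD1 v S) Hv.
have := HA T (ltac:(lia)); have := IH (S :\ v) (ltac:(lia)); lia.
Qed.

Lemma PP_bound j : forall S : {set 'I_n}, 4 ^ j <= #|S| -> 2 ^ (j * j) <= PP S.
Proof.
elim: j => [|j IH] S HS.
  rewrite /PP; have := Hc_ge1 true S; have := Hc_ge1 false S; simpl; nia.
have H := @PP_helper _ _ IH (2 * 4 ^ j - 1) S.
have Hp : 0 < 4 ^ j by rewrite expn_gt0.
have E : 2 ^ (j.+1 * j.+1) = (2 * 4 ^ j - 1 + 1) * 2 ^ (j * j).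
  have -> : 2 * 4 ^ j - 1 + 1 = 2 * 4 ^ j by lia.
  have -> : j.+1 * j.+1 = (j * j + 2 * j).+1 by lia.
  by rewrite (_ : 4 = 2 ^ 2) // -expnM -expnS -expnD; congr (2 ^ _); lia.
rewrite E; apply: H; rewrite expnS in HS; lia.
Qed.

End Graph.


Section Cons.
Variables (n k : nat) (e : rel 'I_n) (tau : bool).

Local Notation V := (pvar k n).

Definition consb (X : {set 'I_n}) (a : V -> option bool) :=
  [&& a None != Some (~~ tau),
    [forall x : 'I_k * 'I_n, (a (Some x) == Some true) ==> (x.2 \in X)],
    [forall x : 'I_k * 'I_n, forall y : 'I_k * 'I_n,
       (a (Some x) == Some true) && (a (Some y) == Some true) ==>
       ((x.1 == y.1) == (x.2 == y.2))] &
    [forall x : 'I_k * 'I_n, (x.2 \in X) && (a (Some x) == Some false) ==>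
       [exists y : 'I_k * 'I_n, (a (Some y) == Some true) && ((y.1 == x.1) || (y.2 == x.2))]]].

Definition Cons (X : {set 'I_n}) (a : V -> option bool) :=
  [/\ a None <> Some (~~ tau),
    forall x, a (Some x) = Some true -> x.2 \in X,
    forall x y, a (Some x) = Some true -> a (Some y) = Some true ->
       (x.1 == y.1) = (x.2 == y.2) &
    forall x, x.2 \in X -> a (Some x) = Some false ->
       exists y, a (Some y) = Some true /\ ((y.1 == x.1) || (y.2 == x.2))].

Lemma consP (X : {set 'I_n}) a : reflect (Cons X a) (consb X a).
Proof.
apply: (iffP idP).
  case/and4P=> H1 /forallP H2 /forallP H3 /forallP H4; split.
  - by move/eqP: H1.
  - by move=> x Hx; have := H2 x; rewrite Hx eqxx.
  - move=> x y Hx Hy; have := H3 x => /forallP /(_ y); rewrite Hx Hy !eqxx /=.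
    by move/eqP.
  - move=> x Hx Hf; have := H4 x; rewrite Hx Hf eqxx /= => /existsP [y /andP[/eqP Hy Hy']].
    by exists y.
case=> H1 H2 H3 H4; apply/and4P; split.
- by apply/eqP.
- apply/forallP => x; apply/implyP => /eqP; exact: H2.
- apply/forallP => x; apply/forallP => y; apply/implyP => /andP[/eqP Hx /eqP Hy].
  by rewrite (H3 _ _ Hx Hy).
- apply/forallP => x; apply/implyP => /andP[Hx /eqP Hf].
  have [y [Hy Hy']] := H4 x Hx Hf; apply/existsP; exists y; by rewrite Hy eqxx.
Qed.

Definition cnt (a : V -> option bool) :=
  #|[set X : {set 'I_n} | hom e tau X && consb X a]|.

Lemma upd_some (a : V -> option bool) z b w :
  upd a (Some z) b (Some w) = if w == z then Some b else a (Some w).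
Proof. by rewrite /upd (inj_eq (@Some_inj _)). Qed.

Lemma upd_none_some (a : V -> option bool) b w : upd a None b (Some w) = a (Some w).
Proof. by []. Qed.

Lemma cons_split (X : {set 'I_n}) a x : a x = None -> Cons X a ->
  Cons X (upd a x false) \/ Cons X (upd a x true).
Proof.
move=> Hx [H1 H2 H3 H4]; case: x Hx => [z|] Hz; last first.
  have Hu : upd a None tau None = Some tau by [].
  have HC : Cons X (upd a None tau).
    split; rewrite ?upd_none_some //.
    by rewrite Hu; case: tau.
  by case: tau HC; [right|left].
case: (boolP ((z.2 \notin X) || [exists y, (a (Some y) == Some true) && ((y.1 == z.1) || (y.2 == z.2))])) => Hc.
- left; split.
  + by [].
  + move=> w; rewrite upd_some; case: (w == z) => //; exact: H2.
  + move=> w w'; rewrite !upd_some; case: (w == z) => //; case: (w' == z) => //; exact: H3.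
  + move=> w Hw; rewrite !upd_some; case: (eqVneq w z) => [Ewz _|Hne Hf].
    * subst w; case/orP: Hc => [Hn|/existsP[y /andP[/eqP Hy Hy']]]; first by rewrite Hw in Hn.
      exists y; rewrite upd_some; case: (eqVneq y _) => [Eyz|_]; last by split.
      by subst y; rewrite Hz in Hy.
    * have [y [Hy Hy']] := H4 w Hw Hf; exists y; rewrite upd_some.
      case: (eqVneq y z) => [Eyz|_]; last by split.
      by subst y; rewrite Hz in Hy.
- right; move: Hc; rewrite negb_or negbK => /andP[HzX Hno].
  have Hno' : forall y, a (Some y) = Some true -> (y.1 == z.1) = false /\ (y.2 == z.2) = false.
    move=> y Hy; have H : ~~ ((y.1 == z.1) || (y.2 == z.2)).
      apply/negP => Hyz; move/negP: Hno; apply.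
      by apply/existsP; exists y; rewrite Hy eqxx.
    by move: H; rewrite negb_or => /andP[/negbTE -> /negbTE ->].
  split.
  + by [].
  + move=> w; rewrite upd_some; case: (eqVneq w z) => [->//|_]; exact: H2.
  + move=> w w'; rewrite !upd_some.
    case: (eqVneq w z) => [->|Hw]; case: (eqVneq w' z) => [->|Hw'] //.
    * by move=> _ _; rewrite !eqxx.
    * move=> _ Hy; have [E1 E2] := Hno' _ Hy; by rewrite eq_sym E1 eq_sym E2.
    * move=> Hy _; have [E1 E2] := Hno' _ Hy; by rewrite E1 E2.
    * exact: H3.
  + move=> w Hw; rewrite upd_some; case: (eqVneq w z) => [//|Hne] Hf.
    have [y [Hy Hy']] := H4 w Hw Hf; exists y; rewrite upd_some.
    case: (eqVneq y z) => [Eyz|_]; last by split.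
    by subst y; rewrite Hz in Hy.
Qed.

Lemma cnt_split a x : a x = None -> cnt a <= cnt (upd a x false) + cnt (upd a x true).
Proof.
move=> Hx; rewrite /cnt.
apply: leq_trans (leq_card_setU _ _).
apply: subset_leq_card; apply/subsetP => X; rewrite !inE => /andP[Hh /consP Hc].
rewrite Hh /=; case: (cons_split Hx Hc) => H; apply/orP; [left|right]; exact/consP.
Qed.

Lemma cnt_leaf a C : Psi' e C -> fals a C -> cnt a <= 1.
Proof.
move=> HC Hf.
case: HC => [[i EC]|[[i [u [v [Huv EC]]]]|[[v [i [j [Hij EC]]]]|[[u [v [i [j [[Huv He Hij] EC]]]]]|[u [v [i [j [[Huv He Hij] EC]]]]]]]]]; subst C.
- set Pos := [set v | [exists y : 'I_k * 'I_n, (a (Some y) == Some true) && (y.2 == v)]].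
  have Hfal w : a (Some (i, w)) = Some false.
    by have := Hf (Some (i, w), true); rewrite /= => ->//; apply/imsetP; exists w.
  rewrite -(cards1 Pos); apply: subset_leq_card; apply/subsetP => X.
  rewrite !inE => /andP[_ /consP [H1 H2 H3 H4]]; apply/eqP/setP => v; rewrite inE.
  apply/idP/existsP.
    move=> Hv; have [y [Hy /orP[Hy1|Hy2]]] := H4 (i, v) Hv (Hfal v).
      have Ey : y = (i, y.2) by move/eqP: Hy1 => /= <-; rewrite -surjective_pairing.
      by rewrite Ey Hfal in Hy.
    by exists y; rewrite Hy eqxx.
  case=> y /andP[/eqP Hy /eqP <-]; exact: H2.
- have Hu : a (Some (i, u)) = Some true by apply: (Hf (Some (i, u), false)); rewrite !inE eqxx.
  have Hv : a (Some (i, v)) = Some true by apply: (Hf (Some (i, v), false)); rewrite !inE eqxx orbT.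
  rewrite /cnt (_ : [set _ | _] = set0) ?cards0 //; apply/setP => X; rewrite !inE.
  apply/negP => /andP[_ /consP [_ _ H3 _]]; have := H3 _ _ Hu Hv; rewrite /= eqxx.
  by move/esym/eqP => E; rewrite E eqxx in Huv.
- have Hu : a (Some (i, v)) = Some true by apply: (Hf (Some (i, v), false)); rewrite !inE eqxx.
  have Hv : a (Some (j, v)) = Some true by apply: (Hf (Some (j, v), false)); rewrite !inE eqxx orbT.
  rewrite /cnt (_ : [set _ | _] = set0) ?cards0 //; apply/setP => X; rewrite !inE.
  apply/negP => /andP[_ /consP [_ _ H3 _]]; have := H3 _ _ Hu Hv; rewrite /= eqxx.
  by move/eqP => E; rewrite E eqxx in Hij.
- have Hy : a None = Some false by apply: (Hf (None, true)); rewrite !inE eqxx.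
  have Hu : a (Some (i, u)) = Some true by apply: (Hf (Some (i, u), false)); rewrite !inE eqxx orbT.
  have Hv : a (Some (j, v)) = Some true by apply: (Hf (Some (j, v), false)); rewrite !inE eqxx !orbT.
  rewrite /cnt (_ : [set _ | _] = set0) ?cards0 //; apply/setP => X; rewrite !inE.
  apply/negP => /andP[Hh /consP [H1 H2 _ _]].
  have Ht : tau = false by move: H1; rewrite Hy; case: tau.
  have Xu := H2 _ Hu; have Xv := H2 _ Hv.
  move: Hh; rewrite /hom Ht => /forallP /(_ u) /implyP /(_ Xu) /forallP /(_ v) /implyP /(_ Xv).
  by rewrite Huv He.
- have Hy : a None = Some true by apply: (Hf (None, false)); rewrite !inE eqxx.
  have Hu : a (Some (i, u)) = Some true by apply: (Hf (Some (i, u), false)); rewrite !inE eqxx orbT.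
  have Hv : a (Some (j, v)) = Some true by apply: (Hf (Some (j, v), false)); rewrite !inE eqxx !orbT.
  rewrite /cnt (_ : [set _ | _] = set0) ?cards0 //; apply/setP => X; rewrite !inE.
  apply/negP => /andP[Hh /consP [H1 H2 _ _]].
  have Ht : tau = true by move: H1; rewrite Hy; case: tau.
  have Xu := H2 _ Hu; have Xv := H2 _ Hv.
  move: Hh; rewrite /hom Ht => /forallP /(_ u) /implyP /(_ Xu) /forallP /(_ v) /implyP /(_ Xv).
  by rewrite Huv /= eqb_id (negbTE He).
Qed.

Lemma cnt_root : cnt (fun _ => None) = Hc e tau setT.
Proof.
rewrite /cnt /Hc; apply: eq_card => X; rewrite !inE subsetT /=.
case: (hom e tau X) => //=; apply/consP; split => //.
Qed.

End Cons.


Lemma exp_mono (x y : R) : Rle x y -> Rle (exp x) (exp y).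
Proof.
move=> H; case: (Rle_lt_or_eq_dec _ _ H) => [Hl|->]; last exact: Rle_refl.
by apply: Rlt_le; apply: exp_increasing.
Qed.

Lemma INR_exp2 p : INR (2 ^ p) = Rpow_def.pow 2 p.
Proof.
elim: p => [//|p IH]; rewrite expnS mult_INR IH /=; lra.
Qed.

Lemma nat_part n : 64 <= n ->
  exists j, [/\ 4 ^ j <= n, n < 4 ^ j.+1, 3 <= j & (j.+1) * (j.+1) <= 8 * ((j * j)./2 - 1)].
Proof.
move=> Hn; exists (trunc_log 4 n); set j := trunc_log 4 n.
have H1 : 4 ^ j <= n by apply: trunc_logP => //; lia.
have H2 : n < 4 ^ j.+1 by apply: trunc_log_ltn.
have H3 : 3 <= j.
  case: (leqP 3 j) => // Hj.
  have : 4 ^ j.+1 <= 4 ^ 3 by rewrite leq_exp2l.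
  move: H2 Hn; lia.
split => //.
have := odd_double_half (j * j). rewrite -!muln2. nia.
Qed.

Section RealPart.
Local Open Scope R_scope.

Lemma real_part (n j m : nat) :
  (1 <= n)%N -> (n < 4 ^ j.+1)%N -> (j.+1 * j.+1 <= 8 * (m - 1))%N ->
  Rpower (INR n) (Rinv (INR 32) * log2R (INR n)) <= INR (2 ^ (m - 1)).
Proof.
move=> Hn H2 HmN.
rewrite INR_exp2.
have Hn0 : 0 < INR n by apply: lt_0_INR; apply/ltP; lia.
have Hl2 : 0 < ln 2 by have := ln_lt_2; lra.
have Hn1 : 0 <= ln (INR n).
  rewrite -ln_1; case: (Rle_lt_or_eq_dec 1 (INR n)) => [|H|<-]; last exact: Rle_refl.
    by apply: (@le_INR 1); apply/leP; lia.
  by apply: Rlt_le; apply: ln_increasing; lra.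
have Hlt : ln (INR n) < INR (2 * j.+1) * ln 2.
  rewrite -ln_pow; last lra.
  apply: ln_increasing => //.
  rewrite -INR_exp2; apply: lt_INR; apply/ltP.
  by move: H2; rewrite expnM (_ : 2 ^ 2 = 4)%N // mulnC.
have HmR : INR (j.+1 * j.+1) <= INR (8 * (m - 1)) by apply: le_INR; apply/leP.
rewrite !mult_INR in HmR.
rewrite mult_INR in Hlt.
rewrite -Rpower_pow; last lra.
rewrite /Rpower; apply: exp_mono.
rewrite /log2R.
set l := ln (INR n) in Hn1 Hlt *.
have Ht2 : ln (INR 2) = ln 2 by [].
rewrite Ht2.
set u := l / ln 2.
have Hlu : l = u * ln 2 by rewrite /u; field; lra.
have Hu0 : 0 <= u by rewrite /u; apply: Rmult_le_pos => //; apply: Rlt_le; apply: Rinv_0_lt_compat.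
have Hu1 : u < INR 2 * INR j.+1 by apply: (Rmult_lt_reg_r (ln 2)) => //; rewrite -Hlu.
rewrite Hlu.
have Hs : u * u <= (INR 2 * INR j.+1) * (INR 2 * INR j.+1) by nra.
have H32 : INR 32 = 32 by simpl; lra.
have H8 : INR 8 = 8 by simpl; lra.
have H2' : INR 2 = 2 by simpl; lra.
rewrite H32; rewrite H8 in HmR; rewrite H2' in Hs.
set J := INR j.+1 in Hs HmR.
set M := INR (m - 1) in HmR *.
have : u * u <= 32 * M by nra.
move=> Huu.
have -> : / 32 * u * (u * ln 2) = (u * u) / 32 * ln 2 by field.
have : u * u / 32 <= M by lra.
nra.
Qed.

End RealPart.

Theorem mainTheorem3 :
  forall c : R, Rlt R0 c ->
  exists eps : R, Rlt R0 eps /\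
  exists N : nat, forall n : nat, (N <= n)%N ->
  forall e : rel 'I_n, symmetric e -> irreflexive e ->
  forall k : nat, INR k = Rmult c (log2R (INR n)) ->
  ramsey e k ->
  forall P : derivation (pvar k n),
  treelike_refutation (Psi' e) P ->
  Rle (Rpower (INR n) (Rmult eps (log2R (INR n)))) (INR (size P)).
Proof.
move=> c Hcpos; exists (Rinv (INR 32)); split.
  by apply: Rinv_0_lt_compat; apply: lt_0_INR; apply/ltP.
exists 64%N => n Hn e Hsym _ k _ _ P HP.
have [j [H1 H2 H3 H4]] := nat_part Hn.
set m := (j * j)./2.
have Hmm : m + m <= j * j by have := odd_double_half (j * j); rewrite -/m -addnn; lia.
have HPP : 2 ^ (j * j) <= PP e [set: 'I_n].
  by apply: (@PP_bound n e Hsym j setT); rewrite cardsT card_ord.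
have [tau Htau] : exists tau, 2 ^ m <= Hc e tau [set: 'I_n].
  case: (leqP (2 ^ m) (Hc e true setT)) => Ht; first by exists true.
  case: (leqP (2 ^ m) (Hc e false setT)) => Hf; first by exists false.
  exfalso.
  have : PP e setT < 2 ^ m * 2 ^ m by apply: ltn_mul.
  rewrite -expnD.
  have : 2 ^ (m + m) <= 2 ^ (j * j) by rewrite leq_exp2l.
  lia.
have Htree := tree_bound HP (@cnt_split n k e tau) (@cnt_leaf n k e tau).
rewrite cnt_root in Htree.
have Hm1 : 1 <= m by rewrite /m; lia.
have Hsz : 2 ^ (m - 1) <= size P.
  have E : 2 ^ m = 2 * 2 ^ (m - 1) by rewrite -expnS; congr (2 ^ _); lia.
  have : 0 < 2 ^ (m - 1) by rewrite expn_gt0.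
  lia.
apply: Rle_trans (real_part _ H2 H4) _; first lia.
by apply: le_INR; apply/leP.
Qed.
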